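(* Let $\sigma$ be a filling of $\mathrm{dg}(\lambda)$, and let $i,r$ be such that the cells $(i,r),(i+1,r)$ lie in $\mathrm{dg}(\lambda)$, $\sigma(i,r)\ne\sigma(i+1,r)$, and $\sigma(i,s)=\sigma(i+1,s)$ for all $1\le s\le r-1$. Let $T$ be the triple formed by the cells $(i+1,r),(i,r),(i,r-1)$ (where $(i,0)$ is the basement cell with entry $\infty$). Then \[ \mathrm{inv}(\mathcal{T}_i^{(r)}(\sigma))=\begin{cases}\mathrm{inv}(\sigma)-1,& T\text{ counterclockwise in }\sigma,\\ \mathrm{inv}(\sigma)+1,&\text{otherwise.}\end{cases} \]
   Context: Diagrams and fillings: for a partition $\lambda=(\lambda_1\ge\dots\ge\lambda_n>0)$, $\mathrm{dg}(\lambda)$ is the set of cells $(i,r)$ with $1\le i\le n$, $1\le r\le\lambda_i$ (column $i$ from the left has $\lambda_i$ cells; rows counted from the bottom). A filling is a map $\sigma:\mathrm{dg}(\lambda)\to\mathbb{Z}_{>0}$. A basement row $0$ is adjoined with $\sigma(i,0)=\infty$. For $u<v$, $r\ge1$, $(v,r),(u,r)\in\mathrm{dg}(\lambda)$, the cells $(v,r),(u,r),(u,r-1)$ form a triple; with $a=\sigma(v,r),b=\sigma(u,r),c=\sigma(u,r-1)$ it is counterclockwise (an inversion triple) if $a<b\le c$ or $c<a<b$ or $b\le c<a$, and clockwise otherwise. $\mathrm{inv}(\sigma)$ is the number of inversion triples (including those with $r=1$). Operator $\mathcal{T}_i^{(r)}$ (defined when columns $i,i+1$ agree in rows $1,\dots,r-1$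 and differ in row $r$): (1) swap the entries of cells $(i,r)$ and $(i+1,r)$; (2) if the cells $(i+1,r+1),(i,r+1)$ do not both exist, stop; otherwise consider the triple $(i+1,r+1),(i,r+1),(i,r)$: if it was counterclockwise both before and after the last swap, or clockwise both before and after, stop; otherwise swap the entries of $(i,r+1)$ and $(i+1,r+1)$, replace $r$ by $r+1$ and repeat step (2). *)

(* Defs.v *)
From mathcomp Require Import all_boot all_order all_algebra.
Set Implicit Arguments. Unset Strict Implicit. Unset Printing Implicit Defensive.

(* A partition is a nonincreasing sequence of positive naturals:
   lam = [:: lambda_1; ...; lambda_n]. Column i (1-indexed) has lambda_i cells. *)
Definition is_partition (lam : seq nat) : bool :=
  sorted geq lam && all (fun x => 0 < x) lam.

Definition colLen (lam : seq nat) (i : nat) : nat := nth 0 lam i.-1.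

Definition in_dg (lam : seq nat) (i r : nat) : bool :=
  (1 <= i <= size lam) && (1 <= r <= colLen lam i).

(* A filling is a map (column, row) |-> entry; only its values on dg(lam)
   matter. *)
Definition filling := nat -> nat -> nat.

Definition is_filling (lam : seq nat) (sigma : filling) : Prop :=
  forall i r, in_dg lam i r -> 0 < sigma i r.

(* Extended positive integers: None represents infinity (basement). *)
Definition xlt (a b : option nat) : bool :=
  match a, b with
  | Some x, Some y => x < y
  | Some _, None => true
  | None, _ => false
  end.
Definition xle (a b : option nat) : bool :=
  match a, b with
  | Some x, Some y => x <= y
  | _, None => true
  | None, Some _ => false
  end.

Definition cellv (sigma : filling) (i r : nat) : option nat :=
  if r == 0 then None else Some (sigma i r).

(* counterclockwise (inversion) triple with a = top-right, b = top-left,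
   c = below b *)
Definition ccw (a b c : option nat) : bool :=
  [|| xlt a b && xle b c, xlt c a && xlt a b | xle b c && xlt c a].

Definition ccw_triple (sigma : filling) (v u r : nat) : bool :=
  ccw (cellv sigma v r) (cellv sigma u r) (cellv sigma u r.-1).

Definition inv_num (lam : seq nat) (sigma : filling) : nat :=
  \sum_(1 <= v < (size lam).+1) \sum_(1 <= u < v)
     \sum_(1 <= r < (colLen lam v).+1)
        (in_dg lam v r && in_dg lam u r && ccw_triple sigma v u r).

Definition swap_cells (sigma : filling) (i r : nat) : filling :=
  fun j s =>
    if s == r then
      (if j == i then sigma i.+1 r else if j == i.+1 then sigma i r else sigma j s)
    else sigma j s.

(* step (2) of the operator, with "prev" the filling before the last swap
   (done in row r) and "cur" the filling after it; fuel bounds the rows. *)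
Fixpoint T_loop (fuel : nat) (lam : seq nat) (i r : nat) (prev cur : filling)
  : filling :=
  match fuel with
  | 0 => cur
  | f.+1 =>
      if in_dg lam i.+1 r.+1 && in_dg lam i r.+1 then
        if ccw_triple prev i.+1 i r.+1 == ccw_triple cur i.+1 i r.+1 then cur
        else T_loop f lam i r.+1 cur (swap_cells cur i r.+1)
      else cur
  end.

(* the operator T_i^{(r)}; the fuel colLen lam i.+1 (= lambda_{i+1}) is never
   exhausted before the procedure stops, since each iteration moves one row up
   and requires row r+1 <= lambda_{i+1} to exist. *)
Definition T_op (lam : seq nat) (i r : nat) (sigma : filling) : filling :=
  T_loop (colLen lam i.+1) lam i r sigma (swap_cells sigma i r).

(* Main.v *)
Require Import Defs.
From mathcomp Require Import all_boot all_order all_algebra.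
From mathcomp Require Import zify.

Definition swapR (sigma : filling) (i r m : nat) : filling :=
  fun j s => if (r <= s <= m)%N then
     (if j == i then sigma i.+1 s else if j == i.+1 then sigma i s else sigma j s)
   else sigma j s.

Lemma swap_step sigma i r0 r cur :
  (r0 <= r.+1)%N ->
  (forall j s, cur j s = swapR sigma i r0 r j s) ->
  forall j s, swap_cells cur i r.+1 j s = swapR sigma i r0 r.+1 j s.
Proof.
move=> Hr Hc j s; rewrite /swap_cells !Hc /swapR.
case: (s =P r.+1) => [->|ne].
  by rewrite Hr leqnn ltnn andbF /=.
have -> : (r0 <= s <= r.+1)%N = (r0 <= s <= r)%N.
  by apply/idP/idP => /andP[a b]; apply/andP; split => //; lia.
by [].
Qed.

Lemma loop_spec fuel lam i r0 r sigma prev cur :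
  (1 <= r0 <= r)%N ->
  (forall j s, prev j s = swapR sigma i r0 r.-1 j s) ->
  (forall j s, cur j s = swapR sigma i r0 r j s) ->
  (colLen lam i.+1 <= fuel + r)%N ->
  exists m, [/\ (r <= m)%N,
    (forall j s, T_loop fuel lam i r prev cur j s = swapR sigma i r0 m j s),
    (forall s, (r < s <= m)%N -> [/\ in_dg lam i.+1 s, in_dg lam i s &
        ccw_triple sigma i.+1 i s != ccw (cellv sigma i.+1 s) (cellv sigma i s) (cellv sigma i.+1 s.-1)]) &
    (in_dg lam i.+1 m.+1 && in_dg lam i m.+1 -> ccw_triple sigma i.+1 i m.+1 =
        ccw (cellv sigma i.+1 m.+1) (cellv sigma i m.+1) (cellv sigma i.+1 m))].
Proof.
elim: fuel r prev cur => [|f IH] r prev cur Hr Hp Hc Hf /=.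
  exists r; split => //; first by move=> s; lia.
  rewrite /in_dg => /andP[/andP[_ /andP[_ H]] _]; lia.
have Eprev : ccw_triple prev i.+1 i r.+1 = ccw_triple sigma i.+1 i r.+1.
  rewrite /ccw_triple /cellv /= !Hp /swapR.
  have -> : (r0 <= r.+1 <= r.-1)%N = false by lia.
  by have -> : (r0 <= r <= r.-1)%N = false by lia.
have Ecur : ccw_triple cur i.+1 i r.+1 =
   ccw (cellv sigma i.+1 r.+1) (cellv sigma i r.+1) (cellv sigma i.+1 r).
  rewrite /ccw_triple /cellv /= !Hc /swapR.
  have -> : (r0 <= r.+1 <= r)%N = false by lia.
  have -> : (r0 <= r <= r)%N = true by lia.
  by rewrite eqxx ?(gtn_eqF (ltnSn i)).
case: ifP => Hdg; last first.
  exists r; split => //; first by move=> s; lia.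
  by rewrite Hdg.
case: ifP => Heq.
  exists r; split => //; first by move=> s; lia.
  by move=> _; rewrite -Eprev -Ecur; apply/eqP.
have H1 : (1 <= r0 <= r.+1)%N by lia.
have H2 : (r0 <= r.+1)%N by lia.
have H3 : (colLen lam i.+1 <= f + r.+1)%N by lia.
have [m [Hm Hres HP1 HP2]] := IH r.+1 cur (swap_cells cur i r.+1) H1 Hc
   (@swap_step sigma i r0 r cur H2 Hc) H3.
exists m; split => //; first lia.
move=> s Hs; case: (s =P r.+1) => [->|ne]; last by apply: HP1; lia.
move: Hdg => /andP[-> ->]; split => //.
by rewrite -Eprev -Ecur Heq.
Qed.

Lemma inv_num_ext lam (f g : filling) : (forall j s, f j s = g j s) ->
  inv_num lam f = inv_num lam g.
Proof.
move=> E; rewrite /inv_num; apply: eq_bigr => v _; apply: eq_bigr => u _.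
apply: eq_bigr => s _; by rewrite /ccw_triple /cellv !E.
Qed.

Lemma widen0 (a b c d : nat) (F : nat -> nat) : (c <= a)%N -> (a <= b)%N -> (b <= d)%N ->
  (forall x, (c <= x < d)%N -> ~~ (a <= x < b)%N -> F x = 0) ->
  \sum_(a <= x < b) F x = \sum_(c <= x < d) F x.
Proof.
move=> ca ab bd HF.
have ad : (a <= d)%N by lia.
rewrite (big_cat_nat (n:=a) (m:=c) (p:=d) ca ad) /=.
rewrite (big_cat_nat (n:=b) (m:=a) (p:=d) ab bd) /=.
have Z1 : \sum_(c <= x < a) F x = 0.
  rewrite big_nat_cond big1 // => x /andP[Hx _]; apply: HF; lia.
have Z2 : \sum_(b <= x < d) F x = 0.
  rewrite big_nat_cond big1 // => x /andP[Hx _]; apply: HF; lia.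
by rewrite Z1 Z2 add0n addn0.
Qed.

Definition hterm lam (sg : filling) s (u v : nat) : bool :=
  in_dg lam v s && in_dg lam u s && ccw_triple sg v u s.
Definition rowc lam sg s :=
  \sum_(u < (size lam).+1) \sum_(v < (size lam).+1) ((u < v)%N && hterm lam sg s u v).

Lemma nth_sumn (l : seq nat) k : (nth 0 l k <= sumn l)%N.
Proof. elim: l k => [|x l IH] [|k] //=; [lia | have := IH k; lia]. Qed.

Lemma inv_rows lam sg : inv_num lam sg = \sum_(s < (sumn lam).+1) rowc lam sg s.
Proof.
rewrite /inv_num /rowc.
set N := (size lam).+1.
set g := fun s (u v : nat) => ((u < v)%N && hterm lam sg s u v) : nat.
have E1 : \sum_(1 <= v < N) \sum_(1 <= u < v) \sum_(1 <= r < (colLen lam v).+1)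
     (in_dg lam v r && in_dg lam u r && ccw_triple sg v u r)
   = \sum_(0 <= v < N) \sum_(0 <= u < N) \sum_(0 <= s < (sumn lam).+1) g s u v.
  transitivity (\sum_(0 <= v < N) \sum_(1 <= u < v) \sum_(1 <= r < (colLen lam v).+1)
     (in_dg lam v r && in_dg lam u r && ccw_triple sg v u r : nat)).
    apply: widen0 => // x Hx1 Hx; rewrite (_ : x = 0); last by lia.
    by rewrite big_geq.
  apply: eq_big_nat => v /andP[v1 vN].
  have [->|v0] := eqVneq v 0.
    by rewrite big_geq // big1 // => u _; rewrite big1.
  transitivity (\sum_(1 <= u < v) \sum_(0 <= s < (sumn lam).+1) g s u v).
    apply: eq_big_nat => u /andP[u1 uv].
    transitivity (\sum_(1 <= s < (colLen lam v).+1) g s u v).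
      by apply: eq_big_nat => s _; rewrite /g /hterm uv.
    apply: widen0 => //.
      by have := nth_sumn lam v.-1; rewrite /colLen; lia.
    move=> s _ Hs; rewrite /g /hterm /in_dg.
    have [->|s0] := eqVneq s 0; first by rewrite /= !andbF.
    have : ~~ (s <= colLen lam v)%N by lia.
    by move=> /negbTE ->; rewrite !andbF.
  apply: widen0; [by []|lia|lia|].
  move=> u _ Hu; rewrite big1 // => s _; rewrite /g /hterm.
  case: (ltnP u v) => //= uv; rewrite /in_dg; have -> : u = 0 by lia.
  by rewrite /= !andbF.
rewrite E1 big_mkord.
under eq_bigr => v _ do rewrite big_mkord exchange_big /=.
under eq_bigr => v _ do rewrite big_mkord.
rewrite exchange_big; apply: eq_bigr => s _.
by rewrite exchange_big.
Qed.
Definition tnat (i j : nat) : nat := if j == i then i.+1 else if j == i.+1 then i else j.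

Lemma tnat_id i u v : (((tnat i u < tnat i v)%N : nat) + ((u == i) && (v == i.+1)) =
   ((u < v)%N : nat) + ((u == i.+1) && (v == i)))%N.
Proof.
rewrite /tnat.
case: (u =P i) => [->|ui]; case: (v =P i) => [->|vi]; 
case: (u =P i.+1) => [|ui1]; case: (v =P i.+1) => [|vi1]; try lia; rewrite /=.
all: try (case: ltnP; case: ltnP; lia).
Qed.

Lemma tnatK i : involutive (tnat i).
Proof.
move=> u; rewrite /tnat.
case: (u =P i) => [->|ui]; first by rewrite eqxx (gtn_eqF (ltnSn i)) ?eqxx.
case: (u =P i.+1) => [->|ui1]; first by rewrite eqxx.
by move/eqP/negbTE: ui => ->; move/eqP/negbTE: ui1 => ->.
Qed.

Lemma tnat_le i n u : (i.+1 <= n)%N -> (u <= n)%N -> (tnat i u <= n)%N.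
Proof. rewrite /tnat; case: (u =P i); case: (u =P i.+1); lia. Qed.

Lemma sum_pick n (a b : nat) (H : nat -> nat -> bool) : (a < n.+1)%N -> (b < n.+1)%N ->
  \sum_(u < n.+1) \sum_(v < n.+1) (((u : nat) == a) && ((v : nat) == b) && H u v) = H a b.
Proof.
move=> Ha Hb.
rewrite (bigD1 (Ordinal Ha)) // (_ : \sum_(u < n.+1 | u != Ordinal Ha) _ = 0) ?addn0;
  last first.
  apply: big1 => u /eqP ne; rewrite big1 // => v _.
  have -> : ((u : nat) == a) = false.
    by apply/eqP => E; apply: ne; apply: val_inj.
  by [].
rewrite (bigD1 (Ordinal Hb)) // (_ : \sum_(v < n.+1 | v != Ordinal Hb) _ = 0) ?addn0 /= ?eqxx //; first by rewrite !addn0 andbT.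
apply: big1 => v /eqP ne; have -> : ((v : nat) == b) = false.
  by apply/eqP => E; apply: ne; apply: val_inj.
by rewrite andbF.
Qed.

Lemma rowc_perm lam (sg tau : filling) s i :
  (i.+1 <= size lam)%N ->
  (forall u v : nat, (u <= size lam)%N -> (v <= size lam)%N ->
     hterm lam tau s u v = hterm lam sg s (tnat i u) (tnat i v)) ->
  (rowc lam tau s + hterm lam sg s i i.+1 = rowc lam sg s + hterm lam sg s i.+1 i)%N.
Proof.
move=> Hi Hh.
set n := size lam.
set H := hterm lam sg s.
pose tord (u : 'I_n.+1) : 'I_n.+1 := inord (tnat i u).
have tordE u : (tord u : nat) = tnat i u.
  by rewrite /tord inordK // ltnS; apply: tnat_le => //; rewrite -ltnS.
have tordK : involutive tord.
  by move=> u; apply: val_inj => /=; rewrite !tordE tnatK.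
have E1 : rowc lam tau s = \sum_(u < n.+1) \sum_(v < n.+1)
     ((tnat i u < tnat i v)%N && H u v).
  rewrite /rowc (reindex_inj (inv_inj tordK)) /=; apply: eq_bigr => u _.
  rewrite (reindex_inj (inv_inj tordK)) /=; apply: eq_bigr => v _.
  rewrite Hh ?tordE ?tnatK // -ltnS.
    by rewrite -tordE.
  by rewrite -tordE.
rewrite E1 /rowc.
rewrite -(@sum_pick n i i.+1 H) ?ltnS //; last by apply: ltnW.
rewrite -(@sum_pick n i.+1 i H) ?ltnS //; last by apply: ltnW.
rewrite -!big_split /=; apply: eq_bigr => u _.
rewrite -!big_split /=; apply: eq_bigr => v _.
have := tnat_id i u v.
by rewrite /H; case: (hterm lam sg s u v); rewrite ?andbT ?andbF //=.
Qed.
Lemma ccw_swap x y c : x != y -> ccw (Some x) (Some y) c = ~~ ccw (Some y) (Some x) c.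
Proof.
move=> /eqP ne; case: c => [z|] /=; rewrite /ccw /=;
case: (ltnP x y); case: (ltnP y x); try case: (leqP x z); try case: (leqP y z);
try case: (ltnP z x); try case: (ltnP z y); lia.
Qed.

Lemma ccw_same x c : ccw (Some x) (Some x) c = false.
Proof.
case: c => [z|]; rewrite /ccw /= ltnn ?andbF //=.
by case: (leqP x z).
Qed.

Lemma swapR_out sg i r m j s : ~~ (r <= s <= m)%N -> swapR sg i r m j s = sg j s.
Proof. by rewrite /swapR => /negbTE ->. Qed.

Lemma swapR_in sg i r m j s : (r <= s <= m)%N -> swapR sg i r m j s = sg (tnat i j) s.
Proof. by rewrite /swapR /tnat => ->; case: (j == i); case: (j == i.+1). Qed.

Lemma hterm_transfer lam (sg tau : filling) i s :
  in_dg lam i s = in_dg lam i.+1 s ->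
  (forall j, cellv tau j s = cellv sg (tnat i j) s) ->
  (forall j, cellv tau j s.-1 = cellv sg (tnat i j) s.-1) ->
  forall u v, hterm lam tau s u v = hterm lam sg s (tnat i u) (tnat i v).
Proof.
move=> Hd E1 E2.
have Hdt j : in_dg lam (tnat i j) s = in_dg lam j s.
  rewrite /tnat; case: (j =P i) => [->|_]; first by rewrite Hd.
  by case: (j =P i.+1) => [->|_].
move=> u v; rewrite /hterm /ccw_triple !Hdt.
have -> : cellv tau v s = cellv sg (tnat i v) s by [].
by rewrite E1 E2.
Qed.

Lemma part_mono lam u v : is_partition lam -> (1 <= u <= v)%N ->
  (colLen lam v <= colLen lam u)%N.
Proof.
move=> /andP[Hs _] /andP[u1 uv]; rewrite /colLen.
case: (ltnP v.-1 (size lam)) => Hv; last by rewrite nth_default.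
have := @sorted_leq_nth _ geq (fun y x z (h1 : geq x y) (h2 : geq y z) => leq_trans h2 h1)
   (fun a => leqnn a) 0 lam Hs u.-1 v.-1.
rewrite !inE => H; apply: H => //; lia.
Qed.
Lemma hhl (a b b' c c' : nat) :
  ccw (Some b') (Some b) (Some c) = ccw (Some b') (Some b) (Some c') ->
  (ccw (Some a) (Some b) (Some c) + ccw (Some a) (Some b') (Some c') =
   ccw (Some a) (Some b) (Some c') + ccw (Some a) (Some b') (Some c))%N.
Proof.
rewrite /ccw /=.
case: (ltnP a b); case: (ltnP a b'); case: (ltnP b c); case: (ltnP b c');
case: (ltnP b' c); case: (ltnP b' c'); case: (ltnP c a); case: (ltnP c' a);
case: (ltnP b' b) => //=; lia.
Qed.


Lemma sum_pick1 n (a : nat) (G : nat -> nat) : (a < n.+1)%N ->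
  \sum_(u < n.+1) (((u : nat) == a) * G u) = G a.
Proof.
move=> Ha.
rewrite (bigD1 (Ordinal Ha)) // (_ : \sum_(u < n.+1 | u != Ordinal Ha) _ = 0) ?addn0;
  last first.
  apply: big1 => u /eqP ne.
  have -> : ((u : nat) == a) = false.
    by apply/eqP => E; apply: ne; apply: val_inj.
  by [].
by rewrite /= eqxx mul1n ?addn0.
Qed.

Lemma sum_pair n a b (F G : nat -> nat) : (a < n.+1)%N -> (b < n.+1)%N -> a != b ->
  (forall u, (u < n.+1)%N -> u != a -> u != b -> F u = G u) ->
  (F a + F b = G a + G b)%N ->
  \sum_(u < n.+1) F u = \sum_(u < n.+1) G u.
Proof.
move=> Ha Hb ab HFG Hab.
have split (H : nat -> nat) : \sum_(u < n.+1) H u = (H a + H b +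
   \sum_(u < n.+1) (~~ (((u : nat) == a) || ((u : nat) == b)) * H u))%N.
  rewrite -(@sum_pick1 n a H Ha) -(@sum_pick1 n b H Hb) -!big_split /=.
  apply: eq_bigr => u _.
  case: ((u : nat) =P a) => [ua|ua]; case: ((u : nat) =P b) => [ub|ub] /=.
  - by move: ab; rewrite -ua -ub eqxx.
  - by rewrite ?mul1n ?mul0n ?addn0 ?add0n.
  - by rewrite ?mul1n ?mul0n ?addn0 ?add0n.
  - by rewrite ?mul1n ?mul0n ?addn0 ?add0n.
rewrite (split F) (split G) Hab; congr (_ + _).
apply: eq_bigr => u _.
case: ((u : nat) =P a) => [ua|ua]; case: ((u : nat) =P b) => [ub|ub] //=.
rewrite !mul1n; apply: HFG => //; by apply/eqP.
Qed.

Local Open Scope ring_scope.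

Theorem mainTheorem3 (lam : seq nat) (sigma : filling) (i r : nat) :
  is_partition lam ->
  is_filling lam sigma ->
  in_dg lam i r -> in_dg lam i.+1 r ->
  sigma i r <> sigma i.+1 r ->
  (forall s, (1 <= s <= r.-1)%N -> sigma i s = sigma i.+1 s) ->
  (inv_num lam (T_op lam i r sigma) : int) =
    if ccw_triple sigma i.+1 i r then (inv_num lam sigma : int) - 1
    else (inv_num lam sigma : int) + 1.
Proof.
move=> Hpart _ Hdi Hdi1 Hne Hbelow.
have [i1 [iS [r1 rli]]] : [/\ (1 <= i)%N, (i.+1 <= size lam)%N, (1 <= r)%N & (r <= colLen lam i)%N].
  move: Hdi Hdi1; rewrite /in_dg => /andP[/andP[a b] /andP[c d]] /andP[/andP[e f] _].
  by split.
have [m [Hrm Hres HP1 HP2]] := @loop_spec (colLen lam i.+1) lam i r r sigma sigma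
    (swap_cells sigma i r) ltac:(lia)
    ltac:(by move=> j s; rewrite swapR_out //; lia)
    ltac:(by move=> j s; rewrite /swap_cells /swapR; case: (s =P r) => [->|ne];
           [rewrite leqnn | have -> : (r <= s <= r)%N = false by lia])
    ltac:(lia).
rewrite /T_op (@inv_num_ext lam _ _ Hres).
set tau := swapR sigma i r m.
set X := ccw_triple sigma i.+1 i r.
suff Hnat : (inv_num lam tau + X = inv_num lam sigma + ~~ X)%N.
  by case: X Hnat => /= Hnat; lia.
have Hdg : forall s, (r <= s <= m)%N -> in_dg lam i.+1 s /\ in_dg lam i s.
  move=> s /andP[rs sm]; have [<-|ne] := eqVneq r s; first by [].
  by have [] := HP1 s ltac:(lia).
have cellE (f : filling) j s : (s != 0)%N -> cellv f j s = Some (f j s).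
  by rewrite /cellv => /negbTE ->.
have tauO j s : ~~ (r <= s <= m)%N -> cellv tau j s = cellv sigma j s.
  by move=> H; rewrite /cellv /tau swapR_out.
have tauI j s : (r <= s <= m)%N -> cellv tau j s = cellv sigma (tnat i j) s.
  by move=> H; rewrite /cellv /tau swapR_in.
have Xdef : X = ccw_triple sigma i.+1 i r by [].
clearbody tau X.
have rows_out s : (s < r)%N || (m.+1 < s)%N -> rowc lam tau s = rowc lam sigma s.
  move=> Hs; apply: eq_bigr => u _; apply: eq_bigr => v _.
  rewrite /hterm /ccw_triple !tauO //; lia.
have row_mid s : (r < s <= m)%N -> rowc lam tau s = rowc lam sigma s.
  move=> Hs; have [D1 D2 Hneq] := HP1 s Hs.
  have Hd : in_dg lam i s = in_dg lam i.+1 s by rewrite D1 D2.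
  have Hs1 : (r <= s <= m)%N by move: Hs; clear; lia.
  have Hs2 : (r <= s.-1 <= m)%N by move: Hs; clear; lia.
  have := @rowc_perm lam sigma tau s i iS
    (fun u v _ _ => @hterm_transfer lam sigma tau i s Hd
        (fun j => tauI j s Hs1) (fun j => tauI j s.-1 Hs2) u v).
  have -> : hterm lam sigma s i i.+1 = hterm lam sigma s i.+1 i; last by move/addIn.
  rewrite /hterm D1 D2 /=.
  have s0 : (s != 0)%N by move: Hs r1; clear; lia.
  have s10 : (s.-1 != 0)%N by move: Hs r1; clear; lia.
  move: Hneq; rewrite /ccw_triple !(cellE _ _ s s0) !(cellE _ _ s.-1 s10).
  have [E|NE] := eqVneq (sigma i s) (sigma i.+1 s).
    by rewrite E !ccw_same.
  rewrite (ccw_swap (sigma i s) (sigma i.+1 s) _ NE); by case: ccw; case: ccw.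
have r0 : (r != 0)%N by move: r1; clear; lia.
have Hbel' : cellv sigma i.+1 r.-1 = cellv sigma i r.-1.
  rewrite /cellv; case: eqP => // Hr0.
  have Hb : (0 < r.-1 <= r.-1)%N by move: Hr0; clear; lia.
  by rewrite (Hbelow _ Hb).
have row_r : (rowc lam tau r + X = rowc lam sigma r + ~~ X)%N.
  have Hr1 : (r <= r <= m)%N by rewrite leqnn Hrm.
  have Hd : in_dg lam i r = in_dg lam i.+1 r by rewrite Hdi Hdi1.
  have E2 j : cellv tau j r.-1 = cellv sigma (tnat i j) r.-1.
    rewrite tauO; last by move: r1; clear; lia.
    rewrite /tnat; case: (j =P i) => [->|_]; first by rewrite Hbel'.
    by case: (j =P i.+1) => [->|_] //.
  have := @rowc_perm lam sigma tau r i iS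
    (fun u v _ _ => @hterm_transfer lam sigma tau i r Hd
        (fun j => tauI j r Hr1) E2 u v).
  have -> : hterm lam sigma r i i.+1 = X by rewrite Xdef /hterm Hdi Hdi1.
  have -> : hterm lam sigma r i.+1 i = ~~ X.
    rewrite Xdef /hterm Hdi Hdi1 /= /ccw_triple Hbel' !(cellE _ _ r r0).
    by apply: ccw_swap; apply/eqP.
  by [].
have row_top : rowc lam tau m.+1 = rowc lam sigma m.+1.
  have m0 : (m != 0)%N by move: r1 Hrm; clear; lia.
  have m10 : (m.+1 != 0)%N by [].
  have Ao j : cellv tau j m.+1 = cellv sigma j m.+1.
    by rewrite tauO //; move: Hrm; clear; lia.
  have Hmm : (r <= m <= m)%N by rewrite Hrm leqnn.
  have Bi : cellv tau i m = cellv sigma i.+1 m by rewrite tauI // /tnat eqxx.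
  have Bi1 : cellv tau i.+1 m = cellv sigma i m.
    by rewrite tauI // /tnat eqxx (gtn_eqF (ltnSn i)).
  have Bo j : j != i -> j != i.+1 -> cellv tau j m = cellv sigma j m.
    by move=> /negbTE ji /negbTE ji1; rewrite tauI // /tnat ji ji1.
  rewrite /rowc.
  apply: (@sum_pair (size lam) i i.+1
    (fun u => (\sum_(v < (size lam).+1) ((u < v)%N && hterm lam tau m.+1 u v))%N)
    (fun u => (\sum_(v < (size lam).+1) ((u < v)%N && hterm lam sigma m.+1 u v))%N)).
  - by move: iS; clear; lia.
  - by [].
  - by rewrite neq_ltn ltnSn.
  - move=> u _ ui ui1; apply: eq_bigr => v _.
    by rewrite /hterm /ccw_triple /= !Ao Bo.
  rewrite -!big_split /=; apply: eq_bigr => v _.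
  rewrite /hterm /ccw_triple /= !Ao Bi Bi1.
  case: (ltngtP v i.+1) => Hv.
  - by [].
  - rewrite /=.
    case Dv : (in_dg lam v m.+1) => //=.
    have P1 := @part_mono lam i.+1 v Hpart ltac:(by rewrite /= ltnW).
    have P2 := @part_mono lam i i.+1 Hpart ltac:(by rewrite i1 leqnSn).
    have Di1 : in_dg lam i.+1 m.+1.
      move: Dv P1 iS; rewrite /in_dg => /andP[/andP[_ a] /andP[_ b]] c d.
      apply/andP; split; apply/andP; split => //; move: b c; clear; lia.
    have Di : in_dg lam i m.+1.
      move: Di1 P2 i1; rewrite /in_dg => /andP[/andP[_ a] /andP[_ b]] c d.
      apply/andP; split; apply/andP; split => //; try (move: b c; clear; lia).
      by move: a; clear; lia.
    rewrite Di Di1 /=.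
    have := HP2 ltac:(by rewrite Di Di1); rewrite /ccw_triple /=.
    rewrite !(cellE _ _ m.+1 m10) !(cellE _ _ m m0) => H.
    by rewrite (hhl _ _ _ _ _ H) addnC.
  - rewrite Hv /= !addn0.
    case E: (in_dg lam i.+1 m.+1 && in_dg lam i m.+1) => //=.
    by have := HP2 E; rewrite /ccw_triple /= => ->.
rewrite !inv_rows.
have rB : (r < (sumn lam).+1)%N.
  have := nth_sumn lam i.-1; move: rli; rewrite /colLen; clear; lia.
have Hall : forall s : 'I_(sumn lam).+1, s != Ordinal rB ->
    rowc lam tau s = rowc lam sigma s.
  move=> s Hs; have sr : (s : nat) != r.
    by apply: contra Hs => /eqP E; apply/eqP; apply: val_inj.
  case: (ltngtP s r) => H1.
  - by apply: rows_out; rewrite H1.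
  - case: (leqP s m) => H2; first by apply: row_mid; rewrite H1 H2.
    case: (ltngtP s m.+1) => H3.
    + by move: H2 H3; clear; lia.
    + by apply: rows_out; rewrite H3 orbT.
    + by rewrite H3; apply: row_top.
  - by move: sr; rewrite H1 eqxx.
rewrite (bigD1 (Ordinal rB)) // (eq_bigr _ Hall) [in RHS](bigD1 (Ordinal rB)) //=.
by rewrite addnAC row_r [RHS]addnAC.
Qed.
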